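(* Let $f(\mathbf{x})=\mathbf{x}^{T}A\mathbf{x}+b^{T}\mathbf{x}+1$ with $A\in\mathbb{R}^{n\times n}$ symmetric and $b\in\mathbb{R}^n$, and let $Q/(1,1)=A-\frac14 bb^{T}$. Then: (i) $f$ has a monic Hermitian determinantal representation of size $2$, i.e. there exist Hermitian $A_1,\dots,A_n\in\mathbb{C}^{2\times 2}$ with $f(\mathbf{x})=\det(I_2+x_1A_1+\dots+x_nA_n)$ for all $\mathbf{x}$, if and only if $Q/(1,1)$ is negative semidefinite and $\operatorname{rank}(Q/(1,1))\le 3$; (ii) $f$ has a monic symmetric determinantal representation of size $2$ (i.e. as in (i) but with $A_j$ real symmetric) if and only if $Q/(1,1)$ is negative semidefinite and $\operatorname{rank}(Q/(1,1))\le 2$. In particular, if $Q/(1,1)$ is negative semidefinite of rank exactly $3$, then $f$ has a monic Hermitian determinantal representation of size $2$ but no monic symmetric determinantal representation of size $2$.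
   Context: $Q=\begin{bmatrix}1 & b^T/2\\ b/2 & A\end{bmatrix}$ is the matrix representation of $f$, i.e. $f(\mathbf{x})=Z^T Q Z$ with $Z=(1,x_1,\dots,x_n)^T$, and $Q/(1,1)$ denotes the Schur complement of its $(1,1)$ entry. *)

(* Defs.v *)
(* The ambient "complex numbers" are an arbitrary
   numClosedFieldType C (e.g. algC); "real" means x \is Num.real. *)
From HB Require Import structures.
From mathcomp Require Import all_boot all_order all_algebra.
Set Implicit Arguments. Unset Strict Implicit. Unset Printing Implicit Defensive.
Import Order.TTheory GRing.Theory Num.Theory.
Local Open Scope ring_scope.

Section Defs.
Variable C : numClosedFieldType.

Definition real_mx m n (M : 'M[C]_(m, n)) : Prop :=
  forall i j, M i j \is Num.real.

Definition quad_poly n (A : 'M[C]_n) (b : 'cV[C]_n) (x : 'cV[C]_n) : C :=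
  (x^T *m A *m x) 0 0 + (b^T *m x) 0 0 + 1.

Definition schur11 n (A : 'M[C]_n) (b : 'cV[C]_n) : 'M[C]_n :=
  A - 4%:R^-1 *: (b *m b^T).

Definition neg_semidef n (S : 'M[C]_n) : Prop :=
  forall v : 'cV[C]_n, real_mx v -> (v^T *m S *m v) 0 0 <= 0.

Definition hermitian m (M : 'M[C]_m) : Prop :=
  forall i j, M i j = (M j i)^*.

Definition real_symmetric m (M : 'M[C]_m) : Prop :=
  real_mx M /\ M^T = M.

Definition det_pencil2 n (Aj : 'I_n -> 'M[C]_2) (x : 'cV[C]_n) : C :=
  \det (1%:M + \sum_(i < n) x i 0 *: Aj i).

Definition has_herm_rep2 n (A : 'M[C]_n) (b : 'cV[C]_n) : Prop :=
  exists Aj : 'I_n -> 'M[C]_2, (forall i, hermitian (Aj i)) /\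
    forall x : 'cV[C]_n, real_mx x -> quad_poly A b x = det_pencil2 Aj x.

Definition has_sym_rep2 n (A : 'M[C]_n) (b : 'cV[C]_n) : Prop :=
  exists Aj : 'I_n -> 'M[C]_2, (forall i, real_symmetric (Aj i)) /\
    forall x : 'cV[C]_n, real_mx x -> quad_poly A b x = det_pencil2 Aj x.
End Defs.

(* Main.v *)
Require Import Defs.
From HB Require Import structures.
From mathcomp Require Import all_boot all_order all_algebra.
From mathcomp Require Import ring.
Set Implicit Arguments. Unset Strict Implicit. Unset Printing Implicit Defensive.
Import Order.TTheory GRing.Theory Num.Theory.
Local Open Scope ring_scope.

Lemma det22 (R : comNzRingType) (M : 'M[R]_2) : \det M = M 0 0 * M 1 1 - M 0 1 * M 1 0.
Proof.
rewrite (expand_det_row _ 0) !big_ord_recl big_ord0 /cofactor.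
rewrite !det_mx11 !mxE /=.
have e1 : lift 0 0 = 1 :> 'I_2 by apply/val_inj.
have e2 : lift (lift ord0 ord0) 0 = 0 :> 'I_2 by apply/val_inj.
have e3 : lift ord0 0 = 1 :> 'I_2 by apply/val_inj.
have e4 : lift ord0 ord0 = 1 :> 'I_2 by apply/val_inj.
rewrite e1 ?e2 ?e3 ?e4 /=.
have e5 : lift 1 0 = 0 :> 'I_2 by apply/val_inj.
rewrite e5 expr0 expr1; ring.
Qed.

Section Aux.
Variable C : numClosedFieldType.

Definition bil n (M : 'M[C]_n) (u v : 'cV[C]_n) : C := (u^T *m M *m v) 0 0.
Definition lin n (w v : 'cV[C]_n) : C := (w^T *m v) 0 0.

Section N.
Variable n : nat.
Implicit Types (M N : 'M[C]_n) (u v w : 'cV[C]_n).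

Lemma bilD1 M u1 u2 v : bil M (u1 + u2) v = bil M u1 v + bil M u2 v.
Proof. by rewrite /bil linearD /= !mulmxDl mxE. Qed.
Lemma bilZ1 M a u v : bil M (a *: u) v = a * bil M u v.
Proof. by rewrite /bil linearZ /= -!scalemxAl mxE. Qed.
Lemma bilD2 M u v1 v2 : bil M u (v1 + v2) = bil M u v1 + bil M u v2.
Proof. by rewrite /bil mulmxDr mxE. Qed.
Lemma bilZ2 M a u v : bil M u (a *: v) = a * bil M u v.
Proof. by rewrite /bil -scalemxAr mxE. Qed.
Lemma bilMD M N u v : bil (M + N) u v = bil M u v + bil N u v.
Proof. by rewrite /bil mulmxDr mulmxDl mxE. Qed.
Lemma bilMN M u v : bil (- M) u v = - bil M u v.
Proof. by rewrite /bil mulmxN mulNmx mxE. Qed.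
Lemma bilMB M N u v : bil (M - N) u v = bil M u v - bil N u v.
Proof. by rewrite bilMD bilMN. Qed.
Lemma bilMZ M a u v : bil (a *: M) u v = a * bil M u v.
Proof. by rewrite /bil -scalemxAr -scalemxAl mxE. Qed.
Lemma bil_sym M u v : M^T = M -> bil M u v = bil M v u.
Proof.
move=> HM; rewrite /bil.
rewrite -[in RHS](trmxK (v^T *m M *m u)) [in RHS]mxE !trmx_mul !trmxK HM mulmxA //.
Qed.
Lemma bil_delta M i j : bil M (delta_mx i 0) (delta_mx j 0) = M i j.
Proof. by rewrite /bil trmx_delta -rowE -colE !mxE. Qed.
Lemma bil_outer w u v : bil (w *m w^T) u v = lin w u * lin w v.
Proof.
rewrite /bil /lin !mulmxA -mulmxA mxE big_ord1.
have -> : u^T *m w = (w^T *m u)^T by rewrite trmx_mul trmxK.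
by rewrite mxE.
Qed.
Lemma lin_sum w v : lin w v = \sum_k w k 0 * v k 0.
Proof. by rewrite /lin mxE; apply: eq_bigr => k _; rewrite mxE. Qed.
Lemma bilE M u v : bil M u v = \sum_k \sum_l u k 0 * M k l * v l 0.
Proof.
rewrite /bil mxE exchange_big; apply: eq_bigr => l _.
rewrite mxE mulr_suml; apply: eq_bigr => k _; by rewrite mxE.
Qed.


Lemma real_lin w v : real_mx w -> real_mx v -> lin w v \is Num.real.
Proof.
move=> Hw Hv; rewrite lin_sum; apply: rpred_sum => k _; exact: rpredM.
Qed.
Lemma real_bil M u v : real_mx M -> real_mx u -> real_mx v -> bil M u v \is Num.real.
Proof.
move=> HM Hu Hv; rewrite bilE; apply: rpred_sum => k _; apply: rpred_sum => l _.
by rewrite !rpredM.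
Qed.
Lemma sym_entry M i j : M^T = M -> M j i = M i j.
Proof. by move=> HM; rewrite -{1}HM mxE. Qed.

Definition psd M := forall v, real_mx v -> 0 <= bil M v v.

Lemma real_delta i : real_mx (delta_mx i 0 : 'cV[C]_n).
Proof. by move=> k l; rewrite mxE; case: (_ && _); rewrite ?rpred1 ?rpred0. Qed.
Lemma real_mxD m p (u v : 'M[C]_(m,p)) : real_mx u -> real_mx v -> real_mx (u + v).
Proof. by move=> Hu Hv k l; rewrite mxE rpredD. Qed.
Lemma real_mxZ m p a (u : 'M[C]_(m,p)) : a \is Num.real -> real_mx u -> real_mx (a *: u).
Proof. by move=> Ha Hu k l; rewrite mxE rpredM. Qed.
Lemma real_mxB m p (u v : 'M[C]_(m,p)) : real_mx u -> real_mx v -> real_mx (u - v).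
Proof. by move=> Hu Hv k l; rewrite !mxE rpredB. Qed.

Lemma psd_offdiag M i j : real_mx M -> M^T = M -> psd M -> M i i = 0 -> M i j = 0.
Proof.
move=> Hr Hs Hp Hii; apply/eqP; apply/negPn/negP => Ha.
have h2 : (2%:R : C) != 0 by rewrite pnatr_eq0.
pose t := - (M j j + 1) / (2%:R * M i j).
have Ht : t \is Num.real by rewrite rpredM ?rpredN ?rpredD ?rpred1 ?rpredV ?rpredM ?rpred_nat.
have := Hp (t *: delta_mx i 0 + delta_mx j 0).
rewrite !(bilD1, bilD2, bilZ1, bilZ2, bil_delta) Hii (sym_entry i j Hs).
have -> : t * (t * 0) + t * M i j + (t * M i j + M j j) = -1.
  rewrite /t; field; by rewrite ?h2 ?Ha ?mulf_neq0.
rewrite oppr_ge0 ler10.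
move=> H; suff: is_true false by []. apply: H; apply: real_mxD; [apply: real_mxZ|]; rewrite // ?real_delta //; exact: real_delta.
Qed.

Lemma lin_col M i v : M^T = M -> lin (col i M) v = bil M (delta_mx i 0) v.
Proof.
move=> HM; rewrite /lin /bil colE trmx_mul HM trmx_delta.
by [].
Qed.

Lemma psd_step M i : real_mx M -> M^T = M -> psd M -> M i i != 0 ->
  let w := (sqrtC (M i i))^-1 *: col i M in
  [/\ real_mx w, real_mx (M - w *m w^T), (M - w *m w^T)^T = M - w *m w^T,
      psd (M - w *m w^T) & (\rank (M - w *m w^T)%R < \rank M)%N].
Proof.
move=> Hr Hs Hp Hd w.
set d := M i i. set e : 'cV[C]_n := delta_mx i 0.
have d0 : 0 <= d by rewrite /d -(bil_delta M i i); apply: Hp; exact: real_delta.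
have dp : 0 < d by rewrite lt0r Hd.
set s := sqrtC d.
have sp : 0 < s by rewrite sqrtC_gt0.
have s0 : s != 0 by rewrite gt_eqF.
have sr : s \is Num.real by exact: gtr0_real.
have s2 : s ^+ 2 = d by rewrite sqrtCK.
have Hw : real_mx w by apply: real_mxZ; [rewrite rpredV | move=> k l; rewrite mxE].
have Hww : real_mx (w *m w^T).
  move=> k l; rewrite mxE big_ord1 [w^T _ _]mxE; exact: rpredM (Hw _ _) (Hw _ _).
have linw v : lin w v = s^-1 * bil M e v.
  by rewrite /lin linearZ /= -scalemxAl mxE -lin_col.
split => //.
- exact: real_mxB Hr Hww.
- by rewrite linearD linearN /= trmx_mul trmxK Hs.
- move=> v Hv.
  rewrite bilMB bil_outer linw.
  set c := bil M e v; set F := bil M v v.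
  have cr : c \is Num.real by apply: real_bil => //; exact: real_delta.
  have Fr : F \is Num.real by apply: real_bil.
  have key : 0 <= d * (d * F - c ^+ 2).
    have Hu : real_mx (d *: v - c *: e).
      apply: real_mxB; apply: real_mxZ => //; rewrite ?gtr0_real //; exact: real_delta.
    have := Hp _ Hu.
    rewrite !(bilD1, bilD2, bilZ1, bilZ2, bil_delta, bilMN).
    have -> : (- (c *: e)) = (-c) *: e by rewrite scaleNr.
    rewrite !(bilZ1, bilZ2, bil_delta) -/d -/c -/F (bil_sym _ _ Hs) -/c.
    move=> H1; apply: le_trans H1 _; rewrite le_eqVlt; apply/orP; left; apply/eqP; ring.
  rewrite pmulr_rge0 // in key.
  have -> : F - s^-1 * c * (s^-1 * c) = d^-1 * (d * F - c ^+ 2).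
    rewrite -s2; field; done.
  by rewrite mulr_ge0 // invr_ge0.
- have HE : w *m w^T = ((s^-1 * s^-1) *: (col i M *m e^T)) *m M.
    rewrite /w linearZ /= -scalemxAl -scalemxAr scalerA colE trmx_mul Hs.
    by rewrite -scalemxAl -!mulmxA.
  have Hsub : (M - w *m w^T <= M)%MS.
    by rewrite HE -{1}[M]mul1mx -mulmxBl submxMl.
  rewrite ltnNge; apply/negP => Hle.
  have : (M <= M - w *m w^T)%MS.
    by rewrite -(mxrank_leqif_sup Hsub).2 eqn_leq Hle (mxrank_leqif_sup Hsub).1.
  case/submxP => D HD.
  have H0 : (M - w *m w^T) *m e = 0.
    rewrite mulmxBl -mulmxA.
    have -> : w^T *m e = (lin w e)%:M by rewrite [LHS]mx11_scalar.
    rewrite mul_mx_scalar linw /e bil_delta -/d /w scalerA colE -/e.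
    have -> : s^-1 * d * s^-1 = 1 by rewrite -s2; field.
    by rewrite scale1r subrr.
  have : (M *m e) i 0 = 0 by rewrite HD -mulmxA H0 mulmx0 mxE.
  by rewrite -colE mxE; apply/eqP.
Qed.

Lemma psd_decomp r : forall M, real_mx M -> M^T = M -> psd M -> (\rank M <= r)%N ->
  exists w : 'I_r -> 'cV[C]_n, (forall j, real_mx (w j)) /\ M = \sum_j w j *m (w j)^T.
Proof.
elim: r => [|r IH] M Hr Hs Hp Hrk.
  exists (fun _ => 0); split; first by move=> j k l; rewrite mxE rpred0.
  rewrite big_ord0; apply/eqP; rewrite -mxrank_eq0 -leqn0 //.
case: (pickP (fun i => M i i != 0)) => [i Hi | H0]; last first.
  exists (fun _ => 0); split; first by move=> j k l; rewrite mxE rpred0.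
  rewrite big1 => [|j _]; last by rewrite mul0mx.
  apply/matrixP => k l; rewrite mxE; apply: psd_offdiag => //.
  by move: (H0 k) => /negbFE/eqP.
have [Hw Hr' Hs' Hp' Hrk'] := psd_step Hr Hs Hp Hi.
set w := (sqrtC (M i i))^-1 *: col i M in Hw Hr' Hs' Hp' Hrk'.
have [w' [Hw' HM']] := IH _ Hr' Hs' Hp' (leq_trans Hrk' Hrk).
exists (fun j => if unlift ord0 j is Some k then w' k else w); split.
  by move=> j; case: (unlift ord0 j).
rewrite big_ord_recl unlift_none.
under eq_bigr do rewrite liftK.
by rewrite -HM' addrC subrK.
Qed.

Lemma linD1 u1 u2 v : lin (u1 + u2) v = lin u1 v + lin u2 v.
Proof. by rewrite /lin linearD /= mulmxDl mxE. Qed.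
Lemma linZ1 a u v : lin (a *: u) v = a * lin u v.
Proof. by rewrite /lin linearZ /= -scalemxAl mxE. Qed.
Lemma linZ2 a u v : lin u (a *: v) = a * lin u v.
Proof. by rewrite /lin -scalemxAr mxE. Qed.
Lemma bil_sum k (F : 'I_k -> 'M[C]_n) u v : bil (\sum_j F j) u v = \sum_j bil (F j) u v.
Proof. by rewrite /bil mulmx_sumr mulmx_suml summxE. Qed.

Lemma form_eq0 M : M^T = M -> (forall v, real_mx v -> bil M v v = 0) -> M = 0.
Proof.
move=> Hs H0; apply/matrixP => k l; rewrite mxE.
have hk : M k k = 0 by rewrite -bil_delta; apply: H0; exact: real_delta.
have hl : M l l = 0 by rewrite -bil_delta; apply: H0; exact: real_delta.
have := H0 (delta_mx k 0 + delta_mx l 0) (real_mxD (real_delta k) (real_delta l)).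
rewrite !(bilD1, bilD2, bil_delta) hk hl (sym_entry k l Hs) add0r addr0.
move/eqP; rewrite -mulr2n mulrn_eq0 /=; exact/eqP.
Qed.

Lemma schur_form (A : 'M[C]_n) (b x : 'cV[C]_n) : bil (schur11 A b) x x = bil A x x - 4%:R^-1 * lin b x ^+ 2.
Proof. by rewrite /schur11 bilMB bilMZ bil_outer expr2. Qed.

Lemma quad_schur (A : 'M[C]_n) (b x : 'cV[C]_n) : quad_poly A b x = bil (schur11 A b) x x + (1 + lin b x / 2%:R) ^+ 2.
Proof.
rewrite schur_form /quad_poly -/(bil A x x) -/(lin b x).
have h2 : (2%:R : C) != 0 by rewrite pnatr_eq0.
have h4 : (4%:R : C) != 0 by rewrite pnatr_eq0.
field; done.
Qed.

Lemma det_herm (Aj : 'I_n -> 'M[C]_2) (x : 'cV[C]_n) : (forall i, Defs.hermitian (Aj i)) -> real_mx x ->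
  det_pencil2 Aj x = (1 + lin (\col_i Aj i 0 0) x) * (1 + lin (\col_i Aj i 1 1) x)
     - lin (\col_i Aj i 0 1) x * ((lin (\col_i Aj i 0 1) x)^*).
Proof.
move=> Hh Hx; rewrite /det_pencil2 det22 !mxE !summxE !lin_sum /=.
rewrite rmorph_sum !add0r.
congr (_ * _ - _ * _).
- congr (_ + _); apply: eq_bigr => i _; rewrite [LHS]mxE [RHS]mulrC [in RHS]mxE //.
- congr (_ + _); apply: eq_bigr => i _; rewrite [LHS]mxE [RHS]mulrC [in RHS]mxE //.
- apply: eq_bigr => i _; rewrite [LHS]mxE [RHS]mulrC [in RHS]mxE //.
- apply: eq_bigr => i _; rewrite [LHS]mxE [in RHS]mxE rmorphM.
  change (x i 0 * Aj i 1 0 = (Aj i 0 1)^* * (x i 0)^*).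
  by rewrite (conj_Creal (Hx _ _)) (Hh i 1 0) mulrC.
Qed.

Lemma linN1 u v : lin (- u) v = - lin u v.
Proof. by rewrite /lin linearN /= mulNmx mxE. Qed.

Lemma alg_elim (a c P R K : C) :
  a + c + 1 = (1 + P) * (1 + R) - K -> a - c + 1 = (1 - P) * (1 - R) - K ->
  a - 4%:R^-1 * c ^+ 2 = - ((2%:R^-1 * (P - R)) ^+ 2 + K).
Proof.
move=> e1 e2.
have h2 : (2%:R : C) != 0 by rewrite pnatr_eq0.
have ha : a = P * R - K.
  have : 2%:R * (a - (P * R - K)) = 0.
    have -> : 2%:R * (a - (P * R - K)) = (a + c + 1 - ((1 + P) * (1 + R) - K)) + (a - c + 1 - ((1 - P) * (1 - R) - K)) by ring.
    by rewrite e1 e2 !subrr addr0.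
  by move/eqP; rewrite mulf_eq0 (negbTE h2) /= subr_eq0 => /eqP.
have hc : c = P + R.
  have : 2%:R * (c - (P + R)) = 0.
    have -> : 2%:R * (c - (P + R)) = (a + c + 1 - ((1 + P) * (1 + R) - K)) - (a - c + 1 - ((1 - P) * (1 - R) - K)) by ring.
    by rewrite e1 e2 !subrr.
  by move/eqP; rewrite mulf_eq0 (negbTE h2) /= subr_eq0 => /eqP.
rewrite ha hc; field; done.
Qed.

Lemma normC_sq (X Y : C) : X \is Num.real -> Y \is Num.real ->
  (X + 'i * Y) * (X + 'i * Y)^* = X ^+ 2 + Y ^+ 2.
Proof.
move=> HX HY; rewrite rmorphD rmorphM /= conjCi (conj_Creal HX) (conj_Creal HY).
have -> : (X + 'i * Y) * (X + - 'i * Y) = X ^+ 2 - ('i * 'i) * Y ^+ 2 by ring.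
by rewrite mulCii mulN1r opprK.
Qed.

Lemma herm_form (A : 'M[C]_n) (b : 'cV[C]_n) (Aj : 'I_n -> 'M[C]_2) :
  (forall i, Defs.hermitian (Aj i)) ->
  (forall x, real_mx x -> quad_poly A b x = det_pencil2 Aj x) ->
  forall v, real_mx v ->
  bil (schur11 A b) v v = - (lin (2%:R^-1 *: (\col_i Aj i 0 0 - \col_i Aj i 1 1)) v ^+ 2
     + lin (\col_i 'Re (Aj i 0 1)) v ^+ 2 + lin (\col_i 'Im (Aj i 0 1)) v ^+ 2).
Proof.
move=> Hh Hrep v Hv.
pose p := \col_i Aj i 0 0; pose r := \col_i Aj i 1 1; pose q := \col_i Aj i 0 1.
pose w1 := \col_i 'Re (Aj i 0 1); pose w2 := \col_i 'Im (Aj i 0 1).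
have Hq : q = w1 + 'i *: w2.
  by apply/matrixP => k l; rewrite !mxE -Crect.
have Hw1 : real_mx w1 by move=> k l; rewrite mxE.
have Hw2 : real_mx w2 by move=> k l; rewrite mxE.
have Hv' : real_mx ((-1) *: v) by apply: real_mxZ; rewrite ?rpredN ?rpred1.
pose P := lin p v; pose R := lin r v; pose Q := lin q v.
have e1 : quad_poly A b v = (1 + P) * (1 + R) - Q * Q^* by rewrite Hrep // det_herm.
have e2 : quad_poly A b ((-1) *: v) = (1 - P) * (1 - R) - Q * Q^*.
  rewrite Hrep // det_herm // !linZ2 !mulN1r -/P -/Q -/R rmorphN /= mulrNN //.
rewrite /quad_poly -/(lin b v) -/(lin b ((-1) *: v)) linZ2 mulN1r in e1 e2.
change (bil A v v + lin b v + 1 = (1 + P) * (1 + R) - Q * Q^*) in e1.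
change (bil A ((-1) *: v) ((-1) *: v) - lin b v + 1 = (1 - P) * (1 - R) - Q * Q^*) in e2.
rewrite bilZ1 bilZ2 !mulN1r opprK in e2.
have HX := real_lin Hw1 Hv; have HY := real_lin Hw2 Hv.
have HQ : Q = lin w1 v + 'i * lin w2 v by rewrite /Q Hq linD1 linZ1.
rewrite HQ normC_sq // in e1 e2.
rewrite schur_form (alg_elim e1 e2).
by rewrite linZ1 linD1 linN1 addrA.
Qed.


Lemma S_eq S w0 w1 w2 : S^T = S ->
  (forall v, real_mx v -> bil S v v = - (lin w0 v ^+ 2 + lin w1 v ^+ 2 + lin w2 v ^+ 2)) ->
  S = - (w0 *m w0^T + w1 *m w1^T + w2 *m w2^T).
Proof.
move=> Hs Hf; apply/eqP; rewrite -subr_eq0 opprK; apply/eqP.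
apply: form_eq0.
  by rewrite !linearD /= !trmx_mul !trmxK Hs.
move=> v Hv; rewrite !bilMD !bil_outer Hf // -!expr2.
by rewrite addNr.
Qed.

Lemma rank_outer w : (\rank (w *m w^T) <= 1)%N.
Proof. exact: leq_trans (mxrankM_maxl _ _) (rank_leq_col w). Qed.

Lemma neg_of_form S w0 w1 w2 : real_mx w0 -> real_mx w1 -> real_mx w2 ->
  (forall v, real_mx v -> bil S v v = - (lin w0 v ^+ 2 + lin w1 v ^+ 2 + lin w2 v ^+ 2)) ->
  neg_semidef S.
Proof.
move=> H0 H1 H2 Hf v Hv; rewrite -/(bil S v v) Hf // oppr_le0.
by rewrite !addr_ge0 // real_exprn_even_ge0 // real_lin.
Qed.

Definition mk2 (a d z : C) : 'M[C]_2 :=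
  \matrix_(k, l) if k == 0 then (if l == 0 then a else z) else (if l == 0 then z^* else d).

Lemma mk2E a d z : [/\ mk2 a d z 0 0 = a, mk2 a d z 1 1 = d, mk2 a d z 0 1 = z & mk2 a d z 1 0 = z^*].
Proof. by rewrite !mxE. Qed.

Lemma mk2_herm a d z : a \is Num.real -> d \is Num.real -> Defs.hermitian (mk2 a d z).
Proof.
move=> Ha Hd k l; rewrite !mxE.
case: k => [[|[|k]] Hk] //; case: l => [[|[|l]] Hl] //=.
- by rewrite conj_Creal.
- by rewrite conjCK.
- by rewrite conj_Creal.
Qed.

Lemma mk2_sym a d z : a \is Num.real -> d \is Num.real -> z \is Num.real ->
  real_symmetric (mk2 a d z).
Proof.
move=> Ha Hd Hz; split.
  move=> k l; rewrite !mxE.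
  case: k => [[|[|k]] Hk] //; case: l => [[|[|l]] Hl] //=; by rewrite conj_Creal.
apply/matrixP => k l; rewrite !mxE.
case: k => [[|[|k]] Hk] //; case: l => [[|[|l]] Hl] //=; by rewrite conj_Creal.
Qed.

Lemma construct (A : 'M[C]_n) b w0 w1 w2 : real_mx b -> real_mx w0 -> real_mx w1 -> real_mx w2 ->
  (forall v, real_mx v -> bil (schur11 A b) v v = - (lin w0 v ^+ 2 + lin w1 v ^+ 2 + lin w2 v ^+ 2)) ->
  exists Aj : 'I_n -> 'M[C]_2, (forall i, Defs.hermitian (Aj i)) /\
    (w2 = 0 -> forall i, real_symmetric (Aj i)) /\
    forall x, real_mx x -> quad_poly A b x = det_pencil2 Aj x.
Proof.
move=> Hb H0 H1 H2 Hf.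
have h2 : (2%:R : C) != 0 by rewrite pnatr_eq0.
have r2 : (2%:R : C)^-1 \is Num.real by rewrite rpredV rpred_nat.
pose Aj i := mk2 (2%:R^-1 * b i 0 + w0 i 0) (2%:R^-1 * b i 0 - w0 i 0) (w1 i 0 + 'i * w2 i 0).
exists Aj; split; last split.
- move=> i; apply: mk2_herm; [exact: rpredD (rpredM r2 (Hb _ _)) (H0 _ _)|exact: rpredB (rpredM r2 (Hb _ _)) (H0 _ _)].
- move=> Hw2 i; rewrite /Aj Hw2 mxE mulr0 addr0.
  apply: mk2_sym; [exact: rpredD (rpredM r2 (Hb _ _)) (H0 _ _)|exact: rpredB (rpredM r2 (Hb _ _)) (H0 _ _)|exact: H1].
move=> x Hx; rewrite det_herm //; last first.
  move=> i; apply: mk2_herm; [exact: rpredD (rpredM r2 (Hb _ _)) (H0 _ _)|exact: rpredB (rpredM r2 (Hb _ _)) (H0 _ _)].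
have -> : \col_i Aj i 0 0 = 2%:R^-1 *: b + w0 by apply/matrixP => k l; rewrite !mxE ord1.
have -> : \col_i Aj i 1 1 = 2%:R^-1 *: b - w0 by apply/matrixP => k l; rewrite !mxE ord1.
have -> : \col_i Aj i 0 1 = w1 + 'i *: w2 by apply/matrixP => k l; rewrite !mxE ord1.
rewrite !linD1 !linN1 !linZ1 normC_sq ?real_lin //.
rewrite quad_schur Hf //; field; done.
Qed.
End N.
End Aux.

Theorem mainTheorem2 (C : numClosedFieldType) (n : nat)
    (A : 'M[C]_n) (b : 'cV[C]_n)
    (hAr : real_mx A) (hAs : A^T = A) (hbr : real_mx b) :
  (has_herm_rep2 A b <->
     neg_semidef (schur11 A b) /\ (\rank (schur11 A b) <= 3)%N) /\
  (has_sym_rep2 A b <->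
     neg_semidef (schur11 A b) /\ (\rank (schur11 A b) <= 2)%N) /\
  (neg_semidef (schur11 A b) -> \rank (schur11 A b) = 3%N ->
     has_herm_rep2 A b /\ ~ has_sym_rep2 A b).
Proof.
have r4 : (4%:R : C)^-1 \is Num.real by rewrite rpredV rpred_nat.
have r2 : (2%:R : C)^-1 \is Num.real by rewrite rpredV rpred_nat.
have hSr : real_mx (schur11 A b).
  move=> k l; rewrite !mxE big_ord1 !mxE.
  by rewrite rpredB ?rpredM ?hAr ?hbr.
have hSs : (schur11 A b)^T = schur11 A b.
  by rewrite /schur11 linearD linearN linearZ /= trmx_mul trmxK hAs.
set S := schur11 A b in hSr hSs *.
have fwd : forall Aj : 'I_n -> 'M[C]_2, (forall i, Defs.hermitian (Aj i)) ->
    (forall x, real_mx x -> quad_poly A b x = det_pencil2 Aj x) ->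
    neg_semidef S /\ (\rank S <= 3)%N /\
    ((forall i, Aj i 0 1 \is Num.real) -> (\rank S <= 2)%N).
  move=> Aj Hh Hrep.
  have Hf := herm_form Hh Hrep.
  have Hd : forall i k, Aj i k k \is Num.real by move=> i k; apply/CrealP; rewrite -Hh.
  have Hw0 : real_mx (2%:R^-1 *: (\col_i Aj i 0 0 - \col_i Aj i 1 1)).
    by move=> k l; rewrite !mxE rpredM // rpredB.
  have Hw1 : real_mx (\col_i 'Re (Aj i 0 1)) by move=> k l; rewrite mxE.
  have Hw2 : real_mx (\col_i 'Im (Aj i 0 1)) by move=> k l; rewrite mxE.
  have HS := S_eq hSs Hf.
  split; first exact: neg_of_form Hw0 Hw1 Hw2 Hf.
  split.
    rewrite HS mxrank_opp.
    apply: leq_trans (mxrank_add _ _) _.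
    apply: leq_trans (leq_add (mxrank_add _ _) (rank_outer _)) _.
    by rewrite -addnA (leq_add (rank_outer _) (leq_add (rank_outer _) (leqnn _))).
  move=> Hreal.
  have E0 : \col_i 'Im (Aj i 0 1) = 0.
    by apply/matrixP => k l; rewrite !mxE; apply/Creal_ImP.
  rewrite E0 in HS.
  rewrite HS mxrank_opp mul0mx addr0.
  apply: leq_trans (mxrank_add _ _) _.
  by rewrite (leq_add (rank_outer _) (rank_outer _)).
have dec : forall r, neg_semidef S -> (\rank S <= r)%N ->
    exists w : 'I_r -> 'cV[C]_n, (forall j, real_mx (w j)) /\
      forall v, bil S v v = - \sum_j lin (w j) v ^+ 2.
  move=> r HN Hrk.
  have [w [Hw HS]] : exists w : 'I_r -> 'cV[C]_n, (forall j, real_mx (w j)) /\ - S = \sum_j w j *m (w j)^T.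
    apply: psd_decomp.
    - by move=> k l; rewrite mxE rpredN.
    - by rewrite linearN /= hSs.
    - by move=> v Hv; rewrite bilMN oppr_ge0; apply: HN.
    - by rewrite mxrank_opp.
  exists w; split => // v.
  rewrite -[S]opprK bilMN HS bil_sum; congr (- _); apply: eq_bigr => j _.
  by rewrite bil_outer expr2.
have bwd3 : neg_semidef S -> (\rank S <= 3)%N -> has_herm_rep2 A b.
  move=> HN Hrk; have [w [Hw Hf]] := dec 3%N HN Hrk.
  have Hf3 : forall v, real_mx v -> bil S v v = - (lin (w ord0) v ^+ 2 + lin (w (lift ord0 ord0)) v ^+ 2
       + lin (w (lift ord0 (lift ord0 ord0))) v ^+ 2).
    by move=> v _; rewrite Hf !big_ord_recl big_ord0 addr0 !addrA.
  have [Aj [Hh [_ Hrep]]] := construct hbr (Hw _) (Hw _) (Hw _) Hf3.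
  by exists Aj.
have bwd2 : neg_semidef S -> (\rank S <= 2)%N -> has_sym_rep2 A b.
  move=> HN Hrk; have [w [Hw Hf]] := dec 2%N HN Hrk.
  have H0 : real_mx (0 : 'cV[C]_n) by move=> k l; rewrite mxE rpred0.
  have Hf3 : forall v, real_mx v -> bil S v v = - (lin (w ord0) v ^+ 2 + lin (w (lift ord0 ord0)) v ^+ 2
       + lin 0 v ^+ 2).
    have L0 : forall v, lin (0 : 'cV[C]_n) v = 0 by move=> v; rewrite /lin trmx0 mul0mx mxE.
    by move=> v _; rewrite Hf !big_ord_recl big_ord0 addr0 L0 (expr2 (0:C)) mulr0 addr0.
  have [Aj [_ [Hs Hrep]]] := construct hbr (Hw _) (Hw _) H0 Hf3.
  by exists Aj; split => //; apply: Hs.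
have sym_herm : has_sym_rep2 A b -> neg_semidef S /\ (\rank S <= 2)%N.
  case=> Aj [Hs Hrep].
  have Hh : forall i, Defs.hermitian (Aj i).
    move=> i k l; have [Hr Ht] := Hs i.
    by rewrite conj_Creal // -{1}Ht mxE.
  have [HN [_ H2]] := fwd Aj Hh Hrep.
  split => //; apply: H2 => i; exact: (Hs i).1.
have herm_fwd : has_herm_rep2 A b -> neg_semidef S /\ (\rank S <= 3)%N.
  by case=> Aj [Hh Hrep]; have [HN [H3 _]] := fwd Aj Hh Hrep.
split; first by split => [|[]]; [exact: herm_fwd | exact: bwd3].
split; first by split => [|[]]; [exact: sym_herm | exact: bwd2].
move=> HN H3; split; first by apply: bwd3 => //; rewrite H3.
by move/sym_herm => [_]; rewrite H3.
Qed.
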